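(* Let $\Sigma$ be a finite alphabet and let $t$ be an unranked ordered $\Sigma$-labeled tree. Then $\|\mathrm{dag}(t)\| \le \|\mathrm{bdag}(t)\|$.
   Context: An unranked tree over $\Sigma$ is a finite rooted tree whose nodes are labeled by symbols of $\Sigma$ and in which the children of every node are linearly ordered (any node may have any finite number of children). The minimal dag $\mathrm{dag}(t)$ of a tree $t$ is obtained by merging all nodes that root identical subtrees (equal as ordered labeled trees); its nodes are in bijection with the distinct subtrees of $t$, and the node of a subtree $f(s_1,\dots,s_k)$ has $k$ ordered outgoing edges to the nodes of $s_1,\dots,s_k$. $\|\mathrm{dag}(t)\|$ denotes its number of nodes, i.e. the number of distinct subtrees of $t$. The first-child/next-sibling encoding $\mathrm{fcns}(t)$ is the binary tree with the same nodes and labels as $t$ in which the left child of a node $u$ is the first child of $u$ in $t$ (if it exists) and the right child of $u$ is the next sibling of $u$ in $t$ (if it exists); binary trees here have, at every node, an optional left child and an optional right child, which are distinguished. $\mathrm{bdag}(t)$ is the minimal dag of $\mathrm{fcns}(t)$ (merging identical subtrees of $\mathrm{fcns}(t)$, absent children not represented), and $\|\mathrm{bdag}(t)\|$ is its number of nodes, i.e. the number of distinct subtrees of $\mathrm{fcns}(t)$. *)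

(* Defs.v *)
From HB Require Import structures.
From mathcomp Require Import all_boot.
Set Implicit Arguments. Unset Strict Implicit. Unset Printing Implicit Defensive.

Inductive tree (S : Type) : Type := Node : S -> seq (tree S) -> tree S.
Arguments Node {S}.

(* Binary trees with optional (distinguished) left and right children;
   BLeaf represents an absent child. *)
Inductive btree (S : Type) : Type :=
| BLeaf : btree S
| BNode : S -> btree S -> btree S -> btree S.
Arguments BLeaf {S}.
Arguments BNode {S}.

Section Eq.
Variable S : eqType.

Fixpoint tree_eqb (t u : tree S) : bool :=
  match t, u with
  | Node a ts, Node b us =>
    (a == b) &&
    (fix aux (ts us : seq (tree S)) : bool :=
       match ts, us with
       | [::], [::] => true
       | t1 :: ts1, u1 :: us1 => tree_eqb t1 u1 && aux ts1 us1
       | _, _ => false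
       end) ts us
  end.

Fixpoint tree_eqbP_aux (t : tree S) : forall u, reflect (t = u) (tree_eqb t u).
Proof.
case: t => a ts [b us] /=.
case: (a =P b) => [<-|neq]; last by right; case.
rewrite /=.
have H : reflect (ts = us)
  ((fix aux (ts us : seq (tree S)) : bool :=
       match ts, us with
       | [::], [::] => true
       | t1 :: ts1, u1 :: us1 => tree_eqb t1 u1 && aux ts1 us1
       | _, _ => false
       end) ts us).
  elim: ts us => [|t1 ts1 IH] [|u1 us1] /=; try by [left | right].
  case: (tree_eqbP_aux t1 u1) => [<-|ne] /=; last by right; case.
  case: (IH us1) => [<-|ne]; [by left | by right; case].
by case: H => [<-|ne]; [left | right; case].
Defined.

Definition tree_eqbP : Equality.axiom tree_eqb := tree_eqbP_aux.
HB.instance Definition _ := hasDecEq.Build (tree S) tree_eqbP.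

Fixpoint btree_eqb (t u : btree S) : bool :=
  match t, u with
  | BLeaf, BLeaf => true
  | BNode a l r, BNode b l' r' => (a == b) && btree_eqb l l' && btree_eqb r r'
  | _, _ => false
  end.

Lemma btree_eqbP : Equality.axiom btree_eqb.
Proof.
elim=> [|a l IHl r IHr] [|b l' r'] /=; try by [left | right].
case: (a =P b) => [<-|ne] /=; last by right; case.
case: (IHl l') => [<-|ne] /=; last by right; case.
case: (IHr r') => [<-|ne]; [by left | by right; case].
Qed.
HB.instance Definition _ := hasDecEq.Build (btree S) btree_eqbP.
End Eq.

Fixpoint subtrees {S : Type} (t : tree S) : seq (tree S) :=
  match t with Node a ts => t :: flatten (map subtrees ts) end.

Fixpoint bsubtrees {S : Type} (t : btree S) : seq (btree S) :=
  match t with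
  | BLeaf => [::]
  | BNode _ l r => t :: bsubtrees l ++ bsubtrees r
  end.

(* First-child/next-sibling encoding: fcns_aux t rest encodes the node t
   whose next-sibling encoding is rest. *)
Fixpoint fcns_aux {S : Type} (t : tree S) (rest : btree S) : btree S :=
  match t with Node a ts => BNode a (foldr fcns_aux BLeaf ts) rest end.

Definition fcns {S : Type} (t : tree S) : btree S := fcns_aux t BLeaf.

(* ||dag(t)|| = number of distinct subtrees of t. *)
Definition dag_size {S : eqType} (t : tree S) : nat := size (undup (subtrees t)).

(* ||bdag(t)|| = number of distinct subtrees of fcns(t). *)
Definition bdag_size {S : eqType} (t : tree S) : nat :=
  size (undup (bsubtrees (fcns t))).

(* Main.v *)
Require Import Defs.
From mathcomp Require Import all_boot.

Section L.
Variable S : eqType.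

Definition tree_ind' (P : tree S -> Prop)
  (H : forall a ts, (forall x, x \in ts -> P x) -> P (Node a ts)) : forall t, P t :=
  fix IH t := match t with Node a ts => H a ts
    ((fix aux (l : seq (tree S)) : forall x, x \in l -> P x :=
      match l return forall x, x \in l -> P x with
      | [::] => fun x (hx : x \in [::]) => ltac:(clear IH; by rewrite in_nil in hx)
      | t1 :: l1 => fun x hx =>
          match boolP (x == t1) with
          | AltTrue e => eq_ind_r P (IH t1) (eqP e)
          | AltFalse ne => aux l1 x ltac:(clear IH aux; by move: hx; rewrite in_cons (negbTE ne))
          end
      end) ts) end.

Fixpoint dl (b : btree S) : seq (tree S) :=
  match b with BLeaf => [::] | BNode a l r => Node a (dl l) :: dl r end.

Lemma dl_fcns t : forall r, dl (fcns_aux t r) = t :: dl r.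
Proof.
elim/tree_ind': t => a ts IH r /=; congr (Node a _ :: _).
elim: ts IH => [|t1 ts1 IHl] IH //=.
rewrite IH ?inE ?eqxx //; congr (_ :: _); apply: IHl => x xin; apply: IH; by rewrite inE xin orbT.
Qed.

Lemma sub_fold (ts : seq (tree S)) (ti : tree S) : ti \in ts -> exists r,
  {subset bsubtrees (fcns_aux ti r) <= bsubtrees (foldr fcns_aux BLeaf ts)}.
Proof.
elim: ts => [|t1 ts1 IH] //; rewrite inE => /orP[/eqP->|/IH [r Hr]].
  by exists (foldr fcns_aux BLeaf ts1).
exists r => x /Hr /= xin; case: t1 => a l /=.
by rewrite inE mem_cat xin !orbT.
Qed.

Lemma main (t : tree S) : forall (rest : btree S) (s : tree S), s \in subtrees t ->
  exists r, fcns_aux s r \in bsubtrees (fcns_aux t rest).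
Proof.
elim/tree_ind': t => a ts IH rest s /=; rewrite inE => /orP[/eqP->|].
  by exists rest; rewrite /= inE eqxx.
case/flattenP => l /mapP [ti tiin ->] sin.
have [r Hr] := sub_fold _ _ tiin.
have [r' Hr'] := IH ti tiin r s sin.
exists r'; rewrite inE mem_cat; apply/orP; right; apply/orP; left; exact: Hr.
Qed.

Lemma undup_map_size (T U : eqType) (f : T -> U) (s : seq T) :
  size (undup (map f s)) <= size (undup s).
Proof.
rewrite -(size_map f); apply: uniq_leq_size; first exact: undup_uniq.
by move=> x; rewrite mem_undup => /mapP [y yin ->]; apply: map_f; rewrite mem_undup.
Qed.
End L.

Theorem lemma2 (Sigma : finType) (t : tree Sigma) : dag_size t <= bdag_size t.
Proof.
rewrite /dag_size /bdag_size.
have H : size (undup (subtrees t)) <= size (undup (map (fun b => ohead (@dl Sigma b)) (bsubtrees (fcns t)))).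
  rewrite -(size_map (@Some _)); apply: uniq_leq_size.
    by rewrite map_inj_uniq ?undup_uniq // => x y [].
  move=> x /mapP [s]; rewrite mem_undup => sin ->.
  have [r Hr] := @main _ t BLeaf s sin.
  rewrite mem_undup; apply/mapP; exists (fcns_aux s r) => //.
  by rewrite dl_fcns.
apply: (leq_trans H); exact: undup_map_size.
Qed.
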